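(* Consider the robot rendezvous system $$\dot{x}_k(t)=x_{k-1}(t)-x_k(t),\quad k\in\mathbb{Z},\ t\ge0,$$ with initial constellation $x_0=(x_k(0))_{k\in\mathbb{Z}}\in\ell^\infty(\mathbb{Z})$. Then $x_0$ is good if and only if there exists $c\in\mathbb{C}$ such that $$\sup_{k\in\mathbb{Z}}\bigg|\frac{1}{n}\sum_{j=1}^n x_{k-j}(0)-c\bigg|\to0\quad\text{as } n\to\infty.$$ Moreover, if this holds, then $\sup_{k\in\mathbb{Z}}|x_k(t)-c|\to0$ as $t\to\infty$.
   Context: $\ell^\infty(\mathbb{Z})$ is the Banach space of bounded doubly infinite complex sequences with the supremum norm. $S$ denotes the right-shift operator on $\ell^\infty(\mathbb{Z})$, $S(x_k)=(x_{k-1})$. For $x_0\in\ell^\infty(\mathbb{Z})$, the solution of the system is $x(t)=(x_k(t))_{k\in\mathbb{Z}}=\exp(t(S-I))x_0$, $t\ge0$. An initial constellation $x_0\in\ell^\infty(\mathbb{Z})$ is called good if there exist constants $c_k\in\mathbb{C}$, $k\in\mathbb{Z}$, such that the corresponding solution satisfies $\sup_{k\in\mathbb{Z}}|x_k(t)-c_k|\to0$ as $t\to\infty$. *)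

(* Defs.v *)
From Stdlib Require Import Reals ZArith ClassicalEpsilon.
Open Scope R_scope.

Record Cx := mkC { Re : R; Im : R }.

Definition Csub (z w : Cx) : Cx := mkC (Re z - Re w) (Im z - Im w).
Definition Cmod (z : Cx) : R := sqrt (Re z ^ 2 + Im z ^ 2).

Definition linf (x : Z -> Cx) : Prop :=
  exists M : R, forall k : Z, Cmod (x k) <= M.

(** Limit of a real sequence (chosen classically; meaningful when it converges). *)
Definition lim_seq (u : nat -> R) : R :=
  epsilon (inhabits 0) (fun l => Un_cv u l).

(** Solution x(t) = exp(t(S-I)) x0 = e^{-t} sum_{j>=0} t^j/j! S^j x0, i.e.
    x_k(t) = e^{-t} sum_{j>=0} t^j/j! x_{k-j}(0)  (S = right shift). *)
Definition sol (x0 : Z -> Cx) (t : R) (k : Z) : Cx :=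
  mkC (exp (- t) * lim_seq (fun n => sum_f_R0
          (fun j => t ^ j / INR (fact j) * Re (x0 (k - Z.of_nat j)%Z)) n))
      (exp (- t) * lim_seq (fun n => sum_f_R0
          (fun j => t ^ j / INR (fact j) * Im (x0 (k - Z.of_nat j)%Z)) n)).

Definition unif_conv_time (x : R -> Z -> Cx) (c : Z -> Cx) : Prop :=
  forall eps : R, eps > 0 -> exists T : R, forall t : R, t >= T ->
    forall k : Z, Cmod (Csub (x t k) (c k)) <= eps.

Definition good (x0 : Z -> Cx) : Prop :=
  exists c : Z -> Cx, unif_conv_time (sol x0) c.

Definition cesaro (x0 : Z -> Cx) (n : nat) (k : Z) : Cx :=
  mkC (/ INR n * sum_f_R0 (fun j => Re (x0 (k - Z.of_nat (S j))%Z)) (pred n))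
      (/ INR n * sum_f_R0 (fun j => Im (x0 (k - Z.of_nat (S j))%Z)) (pred n)).

Definition cesaro_conv (x0 : Z -> Cx) (c : Cx) : Prop :=
  forall eps : R, eps > 0 -> exists N : nat, forall n : nat, (n >= N)%nat -> (n >= 1)%nat ->
    forall k : Z, Cmod (Csub (cesaro x0 n k) c) <= eps.

(* Main.v *)
From Pilot Require Import Defs.
From Stdlib Require Import Reals ZArith.
From Stdlib Require Import Lra Lia ClassicalEpsilon.
From Coquelicot Require Import Coquelicot.
Import Pilot.Defs.
Open Scope R_scope.
Notation isR := (@is_series R_AbsRing R_NormedModule).
Notation exR := (@ex_series R_AbsRing R_NormedModule).

Lemma isR_plus (a b : nat -> R) (la lb : R) : isR a la -> isR b lb ->
  isR (fun n => a n + b n) (la + lb).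
Proof. intros; now apply (is_series_plus a b). Qed.
Lemma isR_minus (a b : nat -> R) (la lb : R) : isR a la -> isR b lb ->
  isR (fun n => a n - b n) (la - lb).
Proof. intros; now apply (is_series_minus a b). Qed.
Lemma isR_scal (c : R) (a : nat -> R) (la : R) : isR a la -> isR (fun n => c * a n) (c * la).
Proof. intros; now apply (is_series_scal_l c a). Qed.
Lemma isR_ext (a b : nat -> R) (l : R) : (forall n, a n = b n) -> isR a l -> is_series b l.
Proof. intros; now apply (is_series_ext a b). Qed.
Lemma isR_decr (a : nat -> R) (l : R) : isR (fun k => a (S k)) (l - a O) -> isR a l.
Proof. intros; now apply (is_series_decr_1 a). Qed.

Lemma lim_seq_eq u l : Un_cv u l -> lim_seq u = l.
Proof.
  intro H. unfold lim_seq.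
  assert (H2 := epsilon_spec (inhabits 0) (fun l => Un_cv u l) (ex_intro _ l H)).
  eapply UL_sequence; eauto.
Qed.

Lemma lim_seq_series a l : is_series a l -> lim_seq (sum_f_R0 a) = l.
Proof. intro H. apply lim_seq_eq. apply is_series_Reals in H. exact H. Qed.

Lemma series_bound (a c : nat -> R) C : (forall n, Rabs (a n) <= c n) -> is_series c C ->
  ex_series a /\ Rabs (Series a) <= C.
Proof.
  intros H Hc.
  assert (Ec : ex_series c) by (exists C; exact Hc).
  assert (Ea : ex_series (fun n => Rabs (a n))).
  { apply (ex_series_le (fun n => Rabs (a n)) c); auto. intros n. 
    change (norm (Rabs (a n))) with (Rabs (Rabs (a n))). rewrite Rabs_Rabsolu. auto. }
  split.
  - apply (ex_series_le a c); auto.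
  - eapply Rle_trans. apply Series_Rabs; auto.
    rewrite <- (is_series_unique c C Hc).
    apply Series_le; auto. intros n; split; [apply Rabs_pos | auto].
Qed.

Definition w (t : R) (j : nat) : R := t ^ j / INR (fact j).

Lemma w_exp t : is_series (w t) (exp t).
Proof.
  assert (H := is_exp_Reals t). unfold is_pseries in H.
  eapply isR_ext; [|exact H]. intros n. simpl. rewrite pow_n_pow. unfold w, Rdiv.
  reflexivity.
Qed.

Lemma w_nonneg t j : 0 <= t -> 0 <= w t j.
Proof. intros. unfold w. apply Rmult_le_pos. apply pow_le; auto.
  apply Rlt_le, Rinv_0_lt_compat, lt_0_INR, lt_O_fact. Qed.

Lemma w_S t j : w t (S j) = t * w t j / INR (S j).
Proof.
  unfold w. rewrite fact_simpl, mult_INR. simpl pow.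
  assert (INR (fact j) <> 0) by (apply not_0_INR, fact_neq_0).
  assert (INR (S j) <> 0) by (apply not_0_INR; lia).
  field. auto.
Qed.

Lemma w_mom1 t : is_series (fun j => INR j * w t j) (t * exp t).
Proof.
  apply isR_decr. change (INR 0) with 0. rewrite Rmult_0_l, Rminus_0_r.
  eapply isR_ext; [| apply (isR_scal t _ _ (w_exp t))].
  intros n. cbv beta. rewrite w_S. assert (INR (S n) <> 0) by (apply not_0_INR; lia). field. auto.
Qed.

Lemma w_mom2 t : is_series (fun j => INR j * (INR j - 1) * w t j) (t * t * exp t).
Proof.
  apply isR_decr. change (INR 0) with 0. rewrite Rmult_0_l, Rmult_0_l, Rminus_0_r.
  apply isR_decr. change (INR 1) with 1. replace ((1 - 1)) with 0 by ring.
  rewrite Rmult_0_r, Rmult_0_l, Rminus_0_r.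
  eapply isR_ext; [| apply (isR_scal (t*t) _ _ (w_exp t))].
  intros n. cbv beta. rewrite !w_S. rewrite !S_INR.
  assert (INR n + 1 <> 0) by (pose proof (pos_INR n); lra).
  assert (INR n + 1 + 1 <> 0) by (pose proof (pos_INR n); lra).
  field. auto.
Qed.

Lemma w_var t : isR (fun j => (t - INR j)^2 * w t j) (t * exp t).
Proof.
  replace (t * exp t) with (t * t * exp t + t * exp t - 2 * t * (t * exp t) + t * t * exp t) by ring.
  eapply isR_ext; [| apply (isR_plus _ _ _ _ (isR_minus _ _ _ _ (isR_plus _ _ _ _ (w_mom2 t) (w_mom1 t)) (isR_scal (2*t) _ _ (w_mom1 t))) (isR_scal (t*t) _ _ (w_exp t)))].
  intros n. simpl. ring.
Qed.

Definition bnd (f : Z -> R) (B : R) := forall m, Rabs (f m) <= B.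

Definition Q (t : R) (f : Z -> R) (k : Z) : R :=
  exp (- t) * Series (fun j => w t j * f (k - Z.of_nat j)%Z).

Lemma exp_inv t : exp (- t) * exp t = 1.
Proof. rewrite <- exp_plus, Rplus_opp_l, exp_0; auto. Qed.

Lemma Q_ex t f B k : 0 <= t -> bnd f B ->
  ex_series (fun j => w t j * f (k - Z.of_nat j)%Z) /\
  Rabs (Series (fun j => w t j * f (k - Z.of_nat j)%Z)) <= B * exp t.
Proof.
  intros Ht Hf. apply (series_bound _ (fun j => B * w t j)).
  - intros n. rewrite Rabs_mult, (Rabs_right (w t n)) by (apply Rle_ge, w_nonneg; auto).
    rewrite Rmult_comm. apply Rmult_le_compat_r; auto. apply w_nonneg; auto.
  - apply isR_scal, w_exp.
Qed.

Lemma Q_bound t f B k : 0 <= t -> bnd f B -> Rabs (Q t f k) <= B.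
Proof.
  intros Ht Hf. destruct (Q_ex t f B k Ht Hf) as [_ H]. unfold Q.
  rewrite Rabs_mult, (Rabs_right (exp _)) by (apply Rle_ge, Rlt_le, exp_pos).
  apply Rle_trans with (exp (-t) * (B * exp t)).
  apply Rmult_le_compat_l; auto. apply Rlt_le, exp_pos.
  rewrite Rmult_comm, Rmult_assoc, (Rmult_comm (exp t)), exp_inv. lra.
Qed.

Lemma Q_plus t f g B1 B2 k : 0 <= t -> bnd f B1 -> bnd g B2 ->
  Q t (fun m => f m + g m) k = Q t f k + Q t g k.
Proof.
  intros Ht Hf Hg. unfold Q. rewrite <- Rmult_plus_distr_l. f_equal.
  rewrite <- Series_plus by (first [apply (Q_ex t f B1 k) | apply (Q_ex t g B2 k)]; auto).
  apply Series_ext. intros; ring.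
Qed.

Lemma Q_scal t f c k : Q t (fun m => c * f m) k = c * Q t f k.
Proof.
  unfold Q.
  rewrite (Series_ext _ (fun n => c * (w t n * f (k - Z.of_nat n)%Z))) by (intros; ring).
  rewrite Series_scal_l. ring.
Qed.

Lemma Q_const t c k : Q t (fun _ => c) k = c.
Proof.
  unfold Q. rewrite (is_series_unique _ (exp t * c)).
  - rewrite <- Rmult_assoc, exp_inv; ring.
  - rewrite Rmult_comm. eapply isR_ext; [| apply (isR_scal c _ _ (w_exp t))]. intros; simpl; ring.
Qed.

Lemma Q_shift t f s k : Q t (fun m => f (m - s)%Z) k = Q t f (k - s)%Z.
Proof.
  unfold Q. f_equal. apply Series_ext. intros n. f_equal. f_equal. lia.
Qed.

Lemma sum_bound (x : nat -> R) M N : (forall i, (i <= N)%nat -> Rabs (x i) <= M) ->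
  Rabs (sum_f_R0 x N) <= INR (S N) * M.
Proof.
  induction N; intros H.
  - simpl. rewrite Rmult_1_l. apply H; auto.
  - simpl sum_f_R0. eapply Rle_trans. apply Rabs_triang.
    rewrite S_INR. rewrite Rmult_plus_distr_r, Rmult_1_l.
    apply Rplus_le_compat. apply IHN; intros; apply H; lia. apply H; auto.
Qed.

Definition zsh (f : Z -> R) (N : nat) (m : Z) : R :=
  sum_f_R0 (fun i => f (m - Z.of_nat (S i))%Z) N.

Lemma zsh_bnd f B N : bnd f B -> bnd (zsh f N) (INR (S N) * B).
Proof. intros H m. apply sum_bound. intros; apply H. Qed.

Lemma Q_ext t f g k : (forall m, f m = g m) -> Q t f k = Q t g k.
Proof. intros H. unfold Q. f_equal. apply Series_ext. intros; rewrite H; auto. Qed.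

Lemma Q_sum t f B N k : 0 <= t -> bnd f B ->
  Q t (zsh f N) k = sum_f_R0 (fun i => Q t f (k - Z.of_nat (S i))%Z) N.
Proof.
  intros Ht Hf. induction N.
  - simpl. unfold zsh. simpl sum_f_R0. apply Q_shift.
  - rewrite (Q_ext t (zsh f (S N)) (fun m => zsh f N m + f (m - Z.of_nat (S (S N)))%Z)) by (intros; reflexivity).
    rewrite (Q_plus t (zsh f N)
                      (fun m => f (m - Z.of_nat (S (S N)))%Z) (INR (S N) * B) B).
    + rewrite IHN, Q_shift. rewrite tech5. reflexivity.
    + auto.
    + apply zsh_bnd; auto.
    + intro m; apply Hf.
Qed.

Lemma abs_amgm x s : 0 < s -> Rabs x <= x ^ 2 / s + s / 4.
Proof.
  intros Hs. assert (E : x^2 = Rabs x ^ 2) by (unfold Rabs; destruct Rcase_abs; ring).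
  rewrite E. set (y := Rabs x).
  assert (0 <= (y - s/2)^2) by apply pow2_ge_0.
  apply Rmult_le_reg_l with s; auto.
  replace (s * (y ^ 2 / s + s / 4)) with (y^2 + s*s/4) by (field; lra). nra.
Qed.

Lemma w_step t j : t <> 0 -> w t (S j) - w t j = w t (S j) * (1 - INR (S j) / t).
Proof.
  intros Ht. rewrite w_S. assert (INR (S j) <> 0) by (apply not_0_INR; lia). field. auto.
Qed.

Lemma Q_diff t f B s k : 0 < t -> 0 < s -> bnd f B ->
  Rabs (Q t f k - Q t f (k - 1)%Z) <= B * (1 / s + s / (4 * t)).
Proof.
  intros Ht Hs Hf.
  set (u := fun j => w t j * f (k - Z.of_nat j)%Z).
  set (v := fun j => w t j * f ((k - 1) - Z.of_nat j)%Z).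
  destruct (Q_ex t f B k) as [Eu _]; try lra; auto.
  destruct (Q_ex t f B (k-1)%Z) as [Ev _]; try lra; auto.
  set (v' := fun j => match j with O => 0 | S i => v i end).
  assert (Hv' : isR v' (Series v)).
  { apply isR_decr. simpl. rewrite Rminus_0_r. apply Series_correct. exact Ev. }
  set (d := fun j => w t j * (1 - INR j / t) * f (k - Z.of_nat j)%Z).
  assert (Hd : isR d (Series u - Series v)).
  { eapply isR_ext; [| apply (isR_minus u v' _ _ (Series_correct _ Eu) Hv')].
    intros [|i]; unfold u, v', v, d; simpl.
    - replace (0/t) with 0 by (field; lra). ring.
    - replace (k - 1 - Z.of_nat i)%Z with (k - Z.of_nat (S i))%Z by lia.
      rewrite <- Rmult_minus_distr_r. f_equal. rewrite w_step by lra. reflexivity. }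
  set (c := fun j => B / t * (/ s * ((t - INR j)^2 * w t j) + s / 4 * w t j)).
  assert (Hc : isR c (B / t * (/ s * (t * exp t) + s / 4 * exp t))).
  { apply isR_scal. apply isR_plus; apply isR_scal; [apply w_var | apply w_exp]. }
  assert (HB : forall j, Rabs (d j) <= c j).
  { intros j. unfold d, c.
    assert (0 <= w t j) by (apply w_nonneg; lra).
    rewrite !Rabs_mult, (Rabs_right (w t j)) by lra.
    replace (1 - INR j / t) with ((t - INR j) / t) by (field; lra).
    rewrite Rabs_div by lra. rewrite (Rabs_right t) by lra.
    assert (Hf' := Hf (k - Z.of_nat j)%Z).
    assert (Ha := abs_amgm (t - INR j) s Hs).
    assert (0 <= Rabs (t - INR j)) by apply Rabs_pos.
    assert (0 <= Rabs (f (k - Z.of_nat j)%Z)) by apply Rabs_pos.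
    apply Rle_trans with (w t j * (Rabs (t - INR j) / t) * B).
    apply Rmult_le_compat_l; auto. apply Rmult_le_pos; auto. apply Rmult_le_pos; auto. left; apply Rinv_0_lt_compat; auto.
    apply Rle_trans with (w t j * (((t - INR j)^2 / s + s / 4) / t) * B).
    apply Rmult_le_compat_r. lra. apply Rmult_le_compat_l; auto. unfold Rdiv. apply Rmult_le_compat_r; auto. left; apply Rinv_0_lt_compat; auto.
    right. field. lra. }
  destruct (series_bound d c _ HB Hc) as [_ Hb].
  unfold Q. fold u. fold v.
  rewrite <- Rmult_minus_distr_l. rewrite <- (is_series_unique _ _ Hd).
  rewrite Rabs_mult, Rabs_right by (apply Rle_ge, Rlt_le, exp_pos).
  eapply Rle_trans. apply Rmult_le_compat_l. apply Rlt_le, exp_pos. exact Hb.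
  right. replace (B / t * (/ s * (t * exp t) + s / 4 * exp t)) with
    (exp t * (B * (1 / s + s / (4 * t)))) by (field; lra).
  rewrite <- Rmult_assoc, exp_inv. ring.
Qed.

Lemma lip_iter (F : Z -> R) L k : (forall m, Rabs (F m - F (m - 1)%Z) <= L) ->
  forall j, Rabs (F k - F (k - Z.of_nat j)%Z) <= INR j * L.
Proof.
  intros H j. induction j.
  - simpl. replace (k - 0)%Z with k by lia. rewrite Rminus_diag, Rabs_R0. lra.
  - rewrite S_INR.
    replace (F k - F (k - Z.of_nat (S j))%Z) with
      ((F k - F (k - Z.of_nat j)%Z) + (F (k - Z.of_nat j)%Z - F (k - Z.of_nat j - 1)%Z)).
    + eapply Rle_trans. apply Rabs_triang. specialize (H (k - Z.of_nat j)%Z). lra.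
    + replace (k - Z.of_nat j - 1)%Z with (k - Z.of_nat (S j))%Z by lia. ring.
Qed.

Lemma Q_near t F B L k : 0 <= t -> bnd F B -> (forall m, Rabs (F m - F (m - 1)%Z) <= L) ->
  Rabs (F k - Q t F k) <= L * t.
Proof.
  intros Ht HF HL.
  assert (E : F k - Q t F k = Q t (fun m => F k + (-1) * F m) k).
  { rewrite (Q_plus t (fun _ => F k) (fun m => -1 * F m) (Rabs (F k)) B).
    - rewrite Q_const, Q_scal. ring.
    - auto.
    - intro; apply Rle_refl.
    - intro m. rewrite Rabs_mult, Rabs_m1, Rmult_1_l. auto. }
  rewrite E. unfold Q.
  assert (HB : forall j, Rabs ((fun j => w t j * (F k + -1 * F (k - Z.of_nat j)%Z)) j) <= (fun j => L * (INR j * w t j)) j).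
  { intros j. cbv beta. assert (0 <= w t j) by (apply w_nonneg; lra).
    rewrite Rabs_mult, Rabs_right by lra.
    replace (F k + -1 * F (k - Z.of_nat j)%Z) with (F k - F (k - Z.of_nat j)%Z) by ring.
    assert (Hl := lip_iter F L k HL j).
    apply Rle_trans with (w t j * (INR j * L)). apply Rmult_le_compat_l; auto. right; ring. }
  destruct (series_bound _ _ _ HB (isR_scal L _ _ (w_mom1 t))) as [_ Hb].
  rewrite Rabs_mult, Rabs_right by (apply Rle_ge, Rlt_le, exp_pos).
  eapply Rle_trans. apply Rmult_le_compat_l. apply Rlt_le, exp_pos. exact Hb.
  right. replace (L * (t * exp t)) with (exp t * (L * t)) by ring.
  rewrite <- Rmult_assoc, exp_inv. ring.
Qed.

Lemma Q_diff_small f B d : 0 < d -> bnd f B ->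
  exists T, T >= 1 /\ forall t, t >= T -> forall k, Rabs (Q t f k - Q t f (k - 1)%Z) <= B * d.
Proof.
  intros Hd Hf. exists (1 + 1 / (d*d)). split.
  { assert (0 < 1/(d*d)) by (apply Rdiv_lt_0_compat; nra). lra. }
  intros t Ht k.
  assert (HB : 0 <= B) by (specialize (Hf k); pose proof (Rabs_pos (f k)); lra).
  assert (H1 : 0 < 1/(d*d)) by (apply Rdiv_lt_0_compat; nra).
  assert (Htp : 0 < t) by lra.
  eapply Rle_trans. apply (Q_diff t f B (2 / d) k Htp); auto. apply Rdiv_lt_0_compat; lra.
  apply Rmult_le_compat_l; auto.
  replace (1 / (2 / d)) with (d / 2) by (field; lra).
  replace (2 / d / (4 * t)) with (/ (2 * d * t)) by (field; lra).
  assert (t * (d * d) >= 1).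
  { assert (t >= 1/(d*d)) by lra.
    apply Rle_ge. apply Rmult_le_reg_r with (/ (d*d)). apply Rinv_0_lt_compat; nra.
    rewrite Rmult_assoc, Rinv_r, Rmult_1_r by nra. lra. }
  assert (/ (2 * d * t) <= d / 2).
  { apply Rmult_le_reg_l with (2 * d * t). nra. rewrite Rinv_r by nra. 
    replace (2 * d * t * (d / 2)) with (t * (d*d)) by field. lra. }
  lra.
Qed.

Lemma avg_bound (x : nat -> R) M N : (forall i, (i <= N)%nat -> Rabs (x i) <= M) ->
  Rabs (/ INR (S N) * sum_f_R0 x N) <= M.
Proof.
  intros H. assert (Hp : 0 < INR (S N)) by (apply lt_0_INR; lia).
  rewrite Rabs_mult, Rabs_right by (apply Rle_ge, Rlt_le, Rinv_0_lt_compat; auto).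
  apply Rmult_le_reg_l with (INR (S N)); auto. rewrite <- Rmult_assoc, Rinv_r, Rmult_1_l by lra.
  apply sum_bound; auto.
Qed.

Definition ces (b : Z -> R) (n : nat) (k : Z) : R :=
  / INR n * sum_f_R0 (fun j => b (k - Z.of_nat (S j))%Z) (pred n).

Lemma realA b B c : bnd b B ->
  (forall e, e > 0 -> exists N, forall n, (n >= N)%nat -> (n >= 1)%nat -> forall k,
      Rabs (ces b n k - c) <= e) ->
  forall e, e > 0 -> exists T, T >= 1 /\ forall t, t >= T -> forall k, Rabs (Q t b k - c) <= e.
Proof.
  intros Hb Hc e He.
  assert (HB : 0 <= B) by (specialize (Hb 0%Z); pose proof (Rabs_pos (b 0%Z)); lra).
  destruct (Hc (e/2)) as [N HN]; [lra|].
  set (n := S N).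
  assert (Hn : 0 < INR n) by (apply lt_0_INR; unfold n; lia).
  set (d := e / (2 * (INR n * B + 1))).
  assert (Hd : 0 < d) by (unfold d; apply Rdiv_lt_0_compat; nra).
  destruct (Q_diff_small b B d Hd Hb) as [T [HT1 HT]].
  exists T. split; auto. intros t Ht k.
  assert (Ht0 : 0 <= t) by lra.
  set (h := fun m => / INR n * zsh b N m).
  assert (Hh : forall m, Rabs (h m - c) <= e / 2).
  { intros m. apply (HN n); unfold n; lia. }
  assert (E1 : Q t h k - c = Q t (fun m => h m - c) k).
  { rewrite (Q_ext t h (fun m => (h m - c) + c)) by (intros; ring).
    rewrite (Q_plus t _ (fun _ => c) (e/2) (Rabs c)); auto.
    rewrite Q_const. ring. intro; apply Rle_refl. }
  assert (H1 : Rabs (Q t h k - c) <= e / 2).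
  { rewrite E1. apply (Q_bound t _ (e/2)); auto. }
  assert (E2 : Q t h k = / INR n * sum_f_R0 (fun i => Q t b (k - Z.of_nat (S i))%Z) N).
  { unfold h. rewrite Q_scal. rewrite (Q_sum t b B); auto. }
  assert (E3 : Q t b k - Q t h k = / INR n * sum_f_R0 (fun i => Q t b k - Q t b (k - Z.of_nat (S i))%Z) N).
  { rewrite E2, minus_sum, sum_cte. fold n. field. lra. }
  assert (H2 : Rabs (Q t b k - Q t h k) <= INR n * (B * d)).
  { rewrite E3. apply avg_bound. intros i Hi.
    eapply Rle_trans. apply (lip_iter (Q t b) (B * d) k). intros m; apply HT; auto.
    apply Rmult_le_compat_r. nra. apply le_INR. unfold n; lia. }
  assert (H3 : INR n * (B * d) <= e / 2).
  { unfold d. replace (INR n * (B * (e / (2 * (INR n * B + 1)))))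
      with (e / 2 * ((INR n * B) / (INR n * B + 1))) by (field; nra).
    rewrite <- (Rmult_1_r (e/2)) at 2. apply Rmult_le_compat_l. lra.
    apply Rmult_le_reg_r with (INR n * B + 1). nra. unfold Rdiv. rewrite Rmult_assoc, Rinv_l by nra. nra. }
  replace (Q t b k - c) with ((Q t b k - Q t h k) + (Q t h k - c)) by ring.
  eapply Rle_trans. apply Rabs_triang. lra.
Qed.

Lemma zsh_step b N m : zsh b N m - zsh b N (m - 1)%Z = b (m - 1)%Z - b (m - 1 - Z.of_nat (S N))%Z.
Proof.
  induction N.
  - unfold zsh. simpl. replace (m - 1 - 1)%Z with (m - 1 - Z.of_nat 1)%Z by lia.
    replace (m - Z.of_nat 1)%Z with (m - 1)%Z by lia. reflexivity.
  - unfold zsh in *. rewrite !tech5.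
    replace (m - Z.of_nat (S (S N)))%Z with (m - 1 - Z.of_nat (S N))%Z by lia.
    replace (m - 1 - Z.of_nat (S (S N)))%Z with (m - 1 - 1 - Z.of_nat (S N))%Z by lia.
    assert (E : forall x y z u : R, x + y - (z + u) = (x - z) + (y - u)) by (intros; ring).
    rewrite E, IHN. ring_simplify.
    replace (m - 1 - 1 - Z.of_nat (S N))%Z with (m - 1 - Z.of_nat (S (S N)))%Z by lia. ring.
Qed.

Lemma small_zero x : (forall e, e > 0 -> Rabs x <= e) -> x = 0.
Proof.
  intros H. destruct (Req_dec x 0) as [|Hx]; auto.
  assert (0 < Rabs x) by (apply Rabs_pos_lt; auto).
  specialize (H (Rabs x / 2)). lra.
Qed.

Lemma realB b B (c : Z -> R) : bnd b B ->
  (forall e, e > 0 -> exists T, forall t, t >= T -> forall k, Rabs (Q t b k - c k) <= e) ->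
  exists c0, forall e, e > 0 -> exists N, forall n, (n >= N)%nat -> (n >= 1)%nat -> forall k,
      Rabs (ces b n k - c0) <= e.
Proof.
  intros Hb Hc.
  assert (HB : 0 <= B) by (specialize (Hb 0%Z); pose proof (Rabs_pos (b 0%Z)); lra).
  assert (Step : forall k, c k = c (k - 1)%Z).
  { intros k. apply Rminus_diag_uniq. apply small_zero. intros e He.
    destruct (Hc (e/3)) as [T1 H1]; [lra|].
    destruct (Q_diff_small b B (e / 3 / (B + 1))) as [T2 [_ H2]]; auto.
    apply Rdiv_lt_0_compat; lra.
    set (t := Rmax T1 T2).
    assert (A1 := H1 t (Rle_ge _ _ (Rmax_l _ _)) k).
    assert (A2 := H1 t (Rle_ge _ _ (Rmax_l _ _)) (k-1)%Z).
    assert (A3 := H2 t (Rle_ge _ _ (Rmax_r _ _)) k).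
    assert (A4 : B * (e / 3 / (B + 1)) <= e / 3).
    { replace (B * (e / 3 / (B + 1))) with (e/3 * (B / (B+1))) by (field; lra).
      rewrite <- (Rmult_1_r (e/3)) at 2. apply Rmult_le_compat_l. lra.
      apply Rmult_le_reg_r with (B + 1). lra. unfold Rdiv. rewrite Rmult_assoc, Rinv_l by lra. lra. }
    replace (c k - c (k - 1)%Z) with ((c k - Q t b k) + (Q t b k - Q t b (k-1)%Z) + (Q t b (k-1)%Z - c (k-1)%Z)) by ring.
    eapply Rle_trans. apply Rabs_triang. eapply Rle_trans. apply Rplus_le_compat_r. apply Rabs_triang.
    rewrite Rabs_minus_sym in A1. lra. }
  assert (Const : forall k, c k = c 0%Z).
  { apply Z.peano_ind; auto.
    - intros x Hx. rewrite <- Hx. rewrite (Step (Z.succ x)). replace (Z.succ x - 1)%Z with x by lia. reflexivity.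
    - intros x Hx. rewrite <- Hx. rewrite (Step x). replace (Z.pred x) with (x-1)%Z by lia. reflexivity. }
  exists (c 0%Z). intros e He.
  destruct (Hc (e/2)) as [T HT]; [lra|].
  set (t := Rmax T 1).
  assert (Ht0 : 0 <= t) by (unfold t; pose proof (Rmax_r T 1); lra).
  destruct (INR_unbounded (4 * B * t / e)) as [N HN].
  exists N. intros n Hn Hn1 k.
  destruct n as [|m]; [lia|]. unfold ces. simpl pred.
  assert (Hnp : 0 < INR (S m)) by (apply lt_0_INR; lia).
  assert (HNm : INR N <= INR (S m)) by (apply le_INR; lia).
  fold (zsh b m k).
  assert (E : / INR (S m) * zsh b m k - c 0%Z =
     / INR (S m) * (zsh b m k - Q t (zsh b m) k) +
     / INR (S m) * sum_f_R0 (fun i => Q t b (k - Z.of_nat (S i))%Z - c 0%Z) m).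
  { rewrite (Q_sum t b B); auto. rewrite minus_sum, sum_cte. field. lra. }
  rewrite E. eapply Rle_trans. apply Rabs_triang.
  assert (H1 : Rabs (/ INR (S m) * (zsh b m k - Q t (zsh b m) k)) <= e / 2).
  { rewrite Rabs_mult, Rabs_right by (apply Rle_ge, Rlt_le, Rinv_0_lt_compat; auto).
    assert (Hq := Q_near t (zsh b m) (INR (S m) * B) (2 * B) k Ht0 (zsh_bnd b B m Hb)).
    assert (Hq' : Rabs (zsh b m k - Q t (zsh b m) k) <= 2 * B * t).
    { apply Hq. intros m'. rewrite zsh_step. eapply Rle_trans. apply Rabs_triang.
      rewrite Rabs_Ropp. pose proof (Hb (m' - 1)%Z). pose proof (Hb (m' - 1 - Z.of_nat (S m))%Z). lra. }
    apply Rmult_le_reg_l with (INR (S m)); auto.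
    rewrite <- Rmult_assoc, Rinv_r, Rmult_1_l by lra.
    eapply Rle_trans. exact Hq'.
    assert (4 * B * t / e * e = 4 * B * t) by (field; lra).
    assert (0 <= B * t) by nra. nra. }
  assert (H2 : Rabs (/ INR (S m) * sum_f_R0 (fun i => Q t b (k - Z.of_nat (S i))%Z - c 0%Z) m) <= e / 2).
  { apply avg_bound. intros i _. rewrite <- (Const (k - Z.of_nat (S i))%Z). apply HT.
    unfold t. apply Rle_ge, Rmax_l. }
  lra.
Qed.

Lemma Cmod_re z : Rabs (Re z) <= Cmod z.
Proof.
  unfold Cmod. rewrite <- sqrt_Rsqr_abs. apply sqrt_le_1_alt. unfold Rsqr.
  pose proof (pow2_ge_0 (Im z)). simpl in *. nra.
Qed.
Lemma Cmod_im z : Rabs (Im z) <= Cmod z.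
Proof.
  unfold Cmod. rewrite <- sqrt_Rsqr_abs. apply sqrt_le_1_alt. unfold Rsqr.
  pose proof (pow2_ge_0 (Re z)). simpl in *. nra.
Qed.
Lemma Cmod_le z : Cmod z <= Rabs (Re z) + Rabs (Im z).
Proof.
  unfold Cmod. rewrite <- (sqrt_Rsqr (Rabs (Re z) + Rabs (Im z))).
  2:{ pose proof (Rabs_pos (Re z)); pose proof (Rabs_pos (Im z)); lra. }
  apply sqrt_le_1_alt. unfold Rsqr.
  pose proof (Rabs_pos (Re z)); pose proof (Rabs_pos (Im z)).
  assert (Re z ^ 2 = Rabs (Re z) * Rabs (Re z)) by (unfold Rabs; destruct Rcase_abs; ring).
  assert (Im z ^ 2 = Rabs (Im z) * Rabs (Im z)) by (unfold Rabs; destruct Rcase_abs; ring).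
  nra.
Qed.

Lemma sol_re x0 t k B : 0 <= t -> bnd (fun m => Re (x0 m)) B ->
  Re (sol x0 t k) = Q t (fun m => Re (x0 m)) k.
Proof.
  intros Ht Hb. unfold sol, Q. simpl. f_equal. apply lim_seq_series.
  apply Series_correct. apply (Q_ex t _ B k Ht Hb).
Qed.
Lemma sol_im x0 t k B : 0 <= t -> bnd (fun m => Im (x0 m)) B ->
  Im (sol x0 t k) = Q t (fun m => Im (x0 m)) k.
Proof.
  intros Ht Hb. unfold sol, Q. simpl. f_equal. apply lim_seq_series.
  apply Series_correct. apply (Q_ex t _ B k Ht Hb).
Qed.

Theorem theorem1 (x0 : Z -> Cx) (hx0 : linf x0) :
  (good x0 <-> exists c : Cx, cesaro_conv x0 c) /\
  (forall c : Cx, cesaro_conv x0 c -> unif_conv_time (sol x0) (fun _ => c)).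
Proof.
  destruct hx0 as [M HM].
  assert (Br : bnd (fun m => Re (x0 m)) M) by (intro m; eapply Rle_trans; [apply Cmod_re | apply HM]).
  assert (Bi : bnd (fun m => Im (x0 m)) M) by (intro m; eapply Rle_trans; [apply Cmod_im | apply HM]).
  assert (P2 : forall c : Cx, cesaro_conv x0 c -> unif_conv_time (sol x0) (fun _ => c)).
  { intros c Hc e He.
    destruct (realA _ M (Re c) Br) with (e := e/2) as [T1 [HT1 H1]]; [| lra |].
    { intros e' He'. destruct (Hc e' He') as [N HN]. exists N. intros n Hn Hn1 k.
      eapply Rle_trans; [| apply (HN n Hn Hn1 k)]. apply (Cmod_re (Csub (cesaro x0 n k) c)). }
    destruct (realA _ M (Im c) Bi) with (e := e/2) as [T2 [HT2 H2]]; [| lra |].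
    { intros e' He'. destruct (Hc e' He') as [N HN]. exists N. intros n Hn Hn1 k.
      eapply Rle_trans; [| apply (HN n Hn Hn1 k)]. apply (Cmod_im (Csub (cesaro x0 n k) c)). }
    exists (Rmax T1 T2). intros t Ht k.
    assert (Ht1 : t >= T1) by (pose proof (Rmax_l T1 T2); lra).
    assert (Ht2 : t >= T2) by (pose proof (Rmax_r T1 T2); lra).
    eapply Rle_trans. apply Cmod_le. unfold Csub; cbn [Re Im].
    rewrite (sol_re x0 t k M), (sol_im x0 t k M); try lra; auto.
    specialize (H1 t Ht1 k). specialize (H2 t Ht2 k). lra. }
  split; auto. split.
  - intros [c Hc].
    assert (Hr : forall e, e > 0 -> exists T, forall t, t >= T -> forall k,
               Rabs (Q t (fun m => Re (x0 m)) k - Re (c k)) <= e).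
    { intros e He. destruct (Hc e He) as [T HT]. exists (Rmax T 1). intros t Ht k.
      assert (t >= T) by (pose proof (Rmax_l T 1); lra).
      assert (t >= 1) by (pose proof (Rmax_r T 1); lra).
      rewrite <- (sol_re x0 t k M) by (auto; lra).
      eapply Rle_trans; [apply (Cmod_re (Csub (sol x0 t k) (c k))) | apply HT; auto]. }
    assert (Hi : forall e, e > 0 -> exists T, forall t, t >= T -> forall k,
               Rabs (Q t (fun m => Im (x0 m)) k - Im (c k)) <= e).
    { intros e He. destruct (Hc e He) as [T HT]. exists (Rmax T 1). intros t Ht k.
      assert (t >= T) by (pose proof (Rmax_l T 1); lra).
      assert (t >= 1) by (pose proof (Rmax_r T 1); lra).
      rewrite <- (sol_im x0 t k M) by (auto; lra).
      eapply Rle_trans; [apply (Cmod_im (Csub (sol x0 t k) (c k))) | apply HT; auto]. }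
    destruct (realB _ M (fun k => Re (c k)) Br Hr) as [cr Hcr].
    destruct (realB _ M (fun k => Im (c k)) Bi Hi) as [ci Hci].
    exists (mkC cr ci). intros e He.
    destruct (Hcr (e/2)) as [N1 HN1]; [lra|].
    destruct (Hci (e/2)) as [N2 HN2]; [lra|].
    exists (max N1 N2). intros n Hn Hn1 k.
    eapply Rle_trans. apply Cmod_le. unfold Csub, cesaro; cbn [Re Im].
    assert (A1 := HN1 n ltac:(lia) Hn1 k). assert (A2 := HN2 n ltac:(lia) Hn1 k).
    unfold ces in A1, A2. lra.
  - intros [c Hc]. exists (fun _ => c). apply P2; auto.
Qed.
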